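(* Let $n>0$ and let $\mathbf{s},\hat{\mathbf{s}}\in\mathbb{R}_{\ge0}^{G_\Delta}$ be such that $\|\mathbf{s}\|_1=n$ and $\|\mathbf{s}-\hat{\mathbf{s}}\|_{\mathrm{EMD}}\le n/2$. Let $\mathbf{a}=\mathbf{s}/\|\mathbf{s}\|_1$ and $\hat{\mathbf{a}}=\hat{\mathbf{s}}/\|\hat{\mathbf{s}}\|_1$. Then $\|\mathbf{a}-\hat{\mathbf{a}}\|_{\mathrm{EMD}}\le 4\|\mathbf{s}-\hat{\mathbf{s}}\|_{\mathrm{EMD}}/n$.
   Context: For $\Delta=2^\ell$, $G_\Delta=\{(i/\Delta,j/\Delta): i,j\in\{0,\dots,\Delta-1\}\}$. For $\mathbf{p},\mathbf{q}\in\mathbb{R}_{\ge0}^{G_\Delta}$ with $\|\mathbf{p}\|_1=\|\mathbf{q}\|_1$, $\mathrm{EMD}(\mathbf{p},\mathbf{q})=\min_\gamma\sum_{x,y\in G_\Delta}\gamma(x,y)\|x-y\|_1$ over $\gamma\in\mathbb{R}_{\ge0}^{G_\Delta\times G_\Delta}$ with marginals $\mathbf{p},\mathbf{q}$. The EMD norm of $\mathbf{w}\in\mathbb{R}^{G_\Delta}$ is $\|\mathbf{w}\|_{\mathrm{EMD}}=\min\{\mathrm{EMD}(\mathbf{p},\mathbf{q})+2\|\mathbf{r}\|_1\}$, the minimum over $\mathbf{p},\mathbf{q}\in\mathbb{R}_{\ge0}^{G_\Delta}$ and $\mathbf{r}\in\mathbb{R}^{G_\Delta}$ with $\mathbf{p}-\mathbf{q}+\mathbf{r}=\mathbf{w}$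 and $\|\mathbf{p}\|_1=\|\mathbf{q}\|_1$. *)

(* Defs.v *)
From HB Require Import structures.
From mathcomp Require Import all_boot all_order all_algebra.
From mathcomp Require Import boolp classical_sets reals.
Set Implicit Arguments. Unset Strict Implicit. Unset Printing Implicit Defensive.
Import Order.TTheory GRing.Theory Num.Theory.
Local Open Scope ring_scope.
Local Open Scope classical_set_scope.

(* The grid G_Delta with Delta = 2^l: the point (i,j) stands for (i/Delta, j/Delta). *)
Definition grid (l : nat) : finType := ('I_(2 ^ l) * 'I_(2 ^ l))%type.

Section EMD.
Variables (R : realType) (l : nat).

Definition gdist (x y : grid l) : R :=
  (`|(x.1 : nat)%:R - (y.1 : nat)%:R| + `|(x.2 : nat)%:R - (y.2 : nat)%:R|)
    / (2 ^ l)%:R.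

Definition l1norm (w : grid l -> R) : R := \sum_(x : grid l) `|w x|.

Definition coupling (p q : grid l -> R) (g : grid l -> grid l -> R) : Prop :=
  [/\ forall x y, 0 <= g x y,
      forall x, \sum_(y : grid l) g x y = p x
    & forall y, \sum_(x : grid l) g x y = q y].

Definition transport_cost (g : grid l -> grid l -> R) : R :=
  \sum_(x : grid l) \sum_(y : grid l) g x y * gdist x y.

(* EMD(p,q) = min over couplings of the transport cost (the min is attained,
   so it equals the infimum) *)
Definition EMD (p q : grid l -> R) : R :=
  inf [set c | exists g, coupling p q g /\ c = transport_cost g].

Definition emd_norm (w : grid l -> R) : R :=
  inf [set c | exists (p q r : grid l -> R),
         [/\ (forall x, 0 <= p x), (forall x, 0 <= q x), l1norm p = l1norm q,
             (forall x, p x - q x + r x = w x)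
           & c = EMD p q + 2 * l1norm r]].

End EMD.

(* Main.v *)
Require Import Defs.
From HB Require Import structures.
From mathcomp Require Import all_boot all_order all_algebra.
From mathcomp Require Import boolp classical_sets reals.
From mathcomp Require Import ring lra.
Import Order.TTheory GRing.Theory Num.Theory.
Local Open Scope ring_scope.

Section Aux.
Variables (R : realType) (l : nat).
Implicit Types (p q r w : grid l -> R) (g : grid l -> grid l -> R).

Lemma gdist_ge0 (x y : grid l) : 0 <= gdist R x y.
Proof. by rewrite /gdist divr_ge0 // addr_ge0. Qed.

Lemma cost_ge0 p q g : coupling p q g -> 0 <= transport_cost g.
Proof.
case=> g0 _ _; rewrite /transport_cost sumr_ge0 // => x _.
by rewrite sumr_ge0 // => y _; rewrite mulr_ge0 // gdist_ge0.
Qed.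

Lemma l1norm_ge0 p : 0 <= l1norm p.
Proof. by rewrite /l1norm sumr_ge0. Qed.

Lemma EMD_ge0 p q : 0 <= EMD p q.
Proof.
rewrite /EMD.
have [->|ne] := eqVneq [set c | exists g, coupling p q g /\ c = transport_cost g]%classic set0.
  by rewrite inf0.
apply: lb_le_inf; first by apply/set0P.
by move=> c [g [cg ->]]; exact: cost_ge0 cg.
Qed.

Lemma EMD_le p q g : coupling p q g -> EMD p q <= transport_cost g.
Proof.
move=> cg; apply: ge_inf; last by exists g.
by exists 0 => c [h [ch ->]]; exact: cost_ge0 ch.
Qed.

Lemma l1norm_nneg p : (forall x, 0 <= p x) -> l1norm p = \sum_x p x.
Proof. by move=> p0; apply: eq_bigr => x _; rewrite ger0_norm. Qed.

Lemma coupling_exists p q : (forall x, 0 <= p x) -> (forall x, 0 <= q x) ->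
  l1norm p = l1norm q -> exists g, coupling p q g.
Proof.
move=> p0 q0 e; have [M0|Mne] := eqVneq (l1norm p) 0.
  have pz x : p x = 0.
    apply/eqP; rewrite eq_le p0 andbT; move: M0; rewrite l1norm_nneg //.
    move=> /eqP; rewrite psumr_eq0 // => /allP/(_ x (mem_index_enum _)) /= /eqP ->//.
  have qz x : q x = 0.
    apply/eqP; rewrite eq_le q0 andbT; move: M0; rewrite e l1norm_nneg //.
    move=> /eqP; rewrite psumr_eq0 // => /allP/(_ x (mem_index_enum _)) /= /eqP ->//.
  exists (fun _ _ => 0); split => // x.
    by rewrite big1 // pz.
  by rewrite big1 // qz.
exists (fun x y => p x * q y / l1norm p); split.
- by move=> x y; rewrite divr_ge0 ?l1norm_ge0 // mulr_ge0.
- move=> x; rewrite -big_distrl -mulr_sumr /= -(l1norm_nneg _ q0) -e.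
  by rewrite -mulrA divff // mulr1.
- move=> y; rewrite -big_distrl -big_distrl /= -(l1norm_nneg _ p0).
  by rewrite mulrC mulrA mulVf // mul1r.
Qed.

Lemma emd_norm_le w p q r : (forall x, 0 <= p x) -> (forall x, 0 <= q x) ->
  l1norm p = l1norm q -> (forall x, p x - q x + r x = w x) ->
  emd_norm w <= EMD p q + 2 * l1norm r.
Proof.
move=> p0 q0 e d; apply: ge_inf; last by exists p, q, r.
exists 0 => c [p' [q' [r' [_ _ _ _ ->]]]].
by rewrite addr_ge0 ?EMD_ge0 // mulr_ge0 ?l1norm_ge0.
Qed.


Lemma EMD_scale p q g (k : R) : 0 < k -> coupling p q g ->
  EMD (fun x => p x / k) (fun x => q x / k) <= transport_cost g / k.
Proof.
move=> k0 [g0 gp gq].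
have ->: transport_cost g / k = transport_cost (fun x y => g x y / k).
  rewrite /transport_cost big_distrl /=; apply: eq_bigr => x _.
  rewrite big_distrl /=; apply: eq_bigr => y _.
  by rewrite mulrAC.
apply: EMD_le; split.
- by move=> x y; rewrite divr_ge0 // ltW.
- by move=> x; rewrite -big_distrl /= gp.
- by move=> y; rewrite -big_distrl /= gq.
Qed.

Lemma l1norm_r2 r (sh : grid l -> R) (k c : R) : 0 < k -> (forall x, 0 <= sh x) ->
  l1norm (fun x => r x / k + sh x * c) <= l1norm r / k + l1norm sh * `|c|.
Proof.
move=> k0 sh0; rewrite (l1norm_nneg _ sh0) /l1norm big_distrl big_distrl /= -big_split /=.
apply: ler_sum => x _; apply: le_trans (ler_normD _ _) _.
by rewrite normrM normrM (ger0_norm (sh0 x)) normfV (gtr0_norm k0).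
Qed.

End Aux.
Arguments coupling_exists {R l p q}.
Arguments cost_ge0 {R l p q g}.
Arguments EMD_scale {R l p q g k}.
Arguments l1norm_r2 {R l} r {sh k} c.
Arguments emd_norm_le {R l w p q r}.
Arguments l1norm_nneg {R l} p.
Arguments l1norm_ge0 {R l}.

Theorem lemma1 (R : realType) (l : nat) (n : R) (s sh : grid l -> R) :
  0 < n ->
  (forall x, 0 <= s x) -> (forall x, 0 <= sh x) ->
  l1norm s = n ->
  emd_norm (fun x => s x - sh x) <= n / 2 ->
  emd_norm (fun x => s x / l1norm s - sh x / l1norm sh)
    <= 4 * emd_norm (fun x => s x - sh x) / n.
Proof.
move=> n0 s0 sh0 Hs _; rewrite Hs.
set E := emd_norm (fun x => s x - sh x).
set nh := l1norm sh.
set X := emd_norm _.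
have nh0 : 0 <= nh by apply: l1norm_ge0.
suff H : n * X / 4 <= E.
  rewrite ler_pdivlMr //; rewrite mulrC; lra.
apply: lb_le_inf.
  exists (EMD (fun _ : grid l => 0) (fun _ => 0) + 2 * l1norm (fun x => s x - sh x)).
  exists (fun _ => 0), (fun _ => 0), (fun x => s x - sh x); split => // x.
  by rewrite subrr add0r.
move=> c [p [q [r [p0 q0 e d ->]]]].
set L := l1norm r.
have L0 : 0 <= L by apply: l1norm_ge0.
suff H : n * X / 4 - 2 * L <= EMD p q by lra.
apply: lb_le_inf.
  by have [g cg] := coupling_exists p0 q0 e; exists (transport_cost g), g.
move=> _ [g [cg ->]].
set t := transport_cost g.
have t0 := cost_ge0 cg.
set cc := n^-1 - nh^-1.
have hX : X <= EMD (fun x => p x / n) (fun x => q x / n)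
               + 2 * l1norm (fun x => r x / n + sh x * cc).
  apply: emd_norm_le.
  - by move=> x; rewrite divr_ge0 // ltW.
  - by move=> x; rewrite divr_ge0 // ltW.
  - rewrite (l1norm_nneg _ (fun x => divr_ge0 (p0 x) (ltW n0))).
    rewrite (l1norm_nneg _ (fun x => divr_ge0 (q0 x) (ltW n0))).
    by rewrite -!big_distrl /= -(l1norm_nneg _ p0) -(l1norm_nneg _ q0) e.
  - move=> x; have dx := d x.
    have -> : r x = s x - sh x - p x + q x by lra.
    rewrite /cc; ring.
have hE := EMD_scale n0 cg.
have hr2 := l1norm_r2 r cc n0 sh0.
rewrite -/L -/nh in hr2.
have hsum : \sum_x r x = n - nh.
  have -> : \sum_x r x = \sum_x (s x - sh x - p x + q x).
    by apply: eq_bigr => x _; have := d x; lra.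
  rewrite big_split /= !sumrB -(l1norm_nneg _ s0) -(l1norm_nneg _ sh0).
  rewrite -(l1norm_nneg _ p0) -(l1norm_nneg _ q0) Hs e -/nh; lra.
have hnr : `|n - nh| <= L by rewrite -hsum; apply: ler_norm_sum.
have hnh : nh * `|cc| <= L / n.
  have [->|nhne] := eqVneq nh 0; first by rewrite mul0r divr_ge0 // ltW.
  have nhp : 0 < nh by rewrite lt_def nhne nh0.
  have -> : nh * `|cc| = `|n - nh| / n.
    have -> : nh * `|cc| = `|nh * cc| by rewrite normrM (gtr0_norm nhp).
    have -> : nh * cc = - ((n - nh) / n).
      rewrite /cc; field; rewrite ?gt_eqF //; try split; rewrite ?gt_eqF //.
    by rewrite normrN normrM normfV (gtr0_norm n0).
  by rewrite ler_pM2r // invr_gt0.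
have hXn : X <= (t + 4 * L) / n.
  have -> : (t + 4 * L) / n = t / n + 2 * (L / n + L / n) by field; rewrite gt_eqF.
  rewrite -/t in hE; lra.
move: hXn; rewrite ler_pdivlMr // => hXn.
rewrite (mulrC X) in hXn; rewrite -/t in t0; lra.
Qed.
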